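(* For $t \in \{0,1,\dots,T\}$ let \[\varphi(t) := \sum_{s=1}^t \nabla L^s(\mathbf{w}^s)\cdot(\mathbf{w}^s - \mathbf{w}^{s+1}) + 19 m^2\gamma^2\eta (T-t) - 4\gamma\sum_{i=1}^m \ln w_i^{t+1},\] where $\nabla L^s(\mathbf{w}^s) = (\partial_1 L^s(\mathbf{w}^s),\dots,\partial_m L^s(\mathbf{w}^s))$. Fix $\alpha\in(0,1/2)$, $m$, $n$. For all sufficiently large $T$, in every run of Algorithm 1 in which the small gradient assumption holds, $\varphi(t)$ is a decreasing function of $t$.
   Context: Setting. There are $m$ experts and $n$ outcomes; $\Delta^k$ is the probability simplex in $\mathbb{R}^k$. For reports $\mathbf{p}^1,\dots,\mathbf{p}^m\in\Delta^n$ and $\mathbf{w}\in\Delta^m$, the logarithmic pool is $p^*_j(\mathbf{w}) = \frac{\prod_k (p^k_j)^{w_k}}{\sum_{\ell}\prod_k (p^k_\ell)^{w_k}}$. At each time $t\in[T]$, reports $\mathbf{p}^{t,1},\dots,\mathbf{p}^{t,m}$ and an outcome $j_t$ are revealed, with loss $L^t(\mathbf{w}) := -\ln p^*_{j_t}(\mathbf{w})$ and, by convention, $\partial_i L^t(\mathbf{w}) := \sum_{\ell} p^*_\ell(\mathbf{w}) \ln p^{t,i}_\ell - \ln p^{t,i}_{j_t}$. Algorithm 1 (parameter $\alpha \in (0,1/2)$): $R(\mathbf{w}) = -\frac{1}{\alpha}\sum_i w_i^\alpha$, $\eta = \frac{1}{\sqrt{T}\ln T}\cdot\frac{1}{12 m^{(1+\alpha)/2}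 n}$, $\mathbf{w}^1 = (1/m,\dots,1/m)$, $\eta_0=+\infty$. For $t=1,\dots,T$: if $\eta \le \min_i (w_i^t)^\alpha$ set $\eta_t = \min(\eta_{t-1},\eta)$, else $\eta_t = \min(\eta_{t-1}, \min_i w_i^t)$; then $\mathbf{w}^{t+1}\in\Delta^m$ is defined by $-(w_i^{t+1})^{\alpha-1} = -(w_i^t)^{\alpha-1} - \eta_t\partial_i L^t(\mathbf{w}^t) + c$ for all $i$, with $c$ the unique constant making $\sum_i w_i^{t+1}=1$. Let $\gamma := 12 n \ln T$. The small gradient assumption holds for a run if for every $t\in[T]$ and $i\in[m]$: $-\frac{\gamma}{w_i^t} \le \partial_i L^t(\mathbf{w}^t) \le \gamma$. *)

(* Defs.v *)
From HB Require Import structures.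
From mathcomp Require Import all_boot all_order all_algebra.
From mathcomp Require Import all_classical all_reals all_analysis.
Set Implicit Arguments. Unset Strict Implicit. Unset Printing Implicit Defensive.
Import Order.TTheory GRing.Theory Num.Theory.
Local Open Scope ring_scope.

Section Defs.
Variable R : realType.
Variables m n : nat.

(* reports: p t i j = p^{t,i}_j ; outcomes: jt t = j_t *)
Definition reports := nat -> 'I_m -> 'I_n -> R.

Definition in_simplex_pos k (x : 'I_k -> R) : Prop :=
  (forall i, 0 < x i) /\ \sum_i x i = 1.

Definition logpool (p : reports) (t : nat) (w : 'I_m -> R) (j : 'I_n) : R :=
  (\prod_k (p t k j) `^ (w k)) / \sum_l \prod_k (p t k l) `^ (w k).

Definition gradL (p : reports) (jt : nat -> 'I_n) (t : nat) (w : 'I_m -> R)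
  (i : 'I_m) : R :=
  \sum_l logpool p t w l * ln (p t i l) - ln (p t i (jt t)).

Definition eta_alg (alpha : R) (T : nat) : R :=
  (Num.sqrt (T%:R) * ln (T%:R))^-1 * (12 * (m%:R) `^ ((1 + alpha) / 2) * n%:R)^-1.

Definition gamma_of (T : nat) : R := 12 * n%:R * ln (T%:R).

(* minimum over 'I_m; 1 is the neutral element (exact for weights in the
   simplex, which are <= 1, when m >= 1) *)
Definition min_over (f : 'I_m -> R) : R := \big[Num.min/1]_i f i.

(* (w, etas) is a run of Algorithm 1 with horizon T on reports p, outcomes jt.
   w t is w^t (t = 1 .. T+1); etas t is eta_t (t = 1 .. T); eta_0 = +oo. *)
Definition is_run (alpha : R) (T : nat) (p : reports) (jt : nat -> 'I_n)
  (w : nat -> 'I_m -> R) (etas : nat -> R) : Prop :=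
  (forall i, w 1%N i = (m%:R)^-1) /\
  forall t, (1 <= t <= T)%N ->
    let eta := eta_alg alpha T in
    let x := if [forall i, eta <= (w t i) `^ alpha] then eta
             else min_over (w t) in
    etas t = (if t == 1%N then x else Num.min (etas t.-1) x) /\
    in_simplex_pos (w t.+1) /\
    exists c : R, forall i,
      - (w t.+1 i) `^ (alpha - 1) =
      - (w t i) `^ (alpha - 1) - etas t * gradL p jt t (w t) i + c.

Definition small_gradient (T : nat) (p : reports) (jt : nat -> 'I_n)
  (w : nat -> 'I_m -> R) : Prop :=
  forall t, (1 <= t <= T)%N -> forall i,
    - gamma_of T / w t i <= gradL p jt t (w t) i /\
    gradL p jt t (w t) i <= gamma_of T.

Definition phi (alpha : R) (T : nat) (p : reports) (jt : nat -> 'I_n)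
  (w : nat -> 'I_m -> R) (t : nat) : R :=
  \sum_(1 <= s < t.+1) \sum_i gradL p jt s (w s) i * (w s i - w s.+1 i)
  + 19 * (m%:R) ^+ 2 * (gamma_of T) ^+ 2 * eta_alg alpha T * ((T%:R) - (t%:R))
  - 4 * gamma_of T * \sum_i ln (w t.+1 i).

End Defs.

(* Main.v *)
Require Import Defs.
From HB Require Import structures.
From mathcomp Require Import all_boot all_order all_algebra.
From mathcomp Require Import all_classical all_reals all_analysis.
From mathcomp Require Import ring lra zify.
Import Order.TTheory GRing.Theory Num.Theory.
Local Open Scope ring_scope.

Module Aux.
Set Implicit Arguments. Unset Strict Implicit. Unset Printing Implicit Defensive.

Lemma ln_le_sub1 (R : realType) (x : R) : 0 < x -> ln x <= x - 1.
Proof. move=> x0. have := expR_ge1Dx (ln x). rewrite lnK ?posrE //. lra. Qed.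

Lemma tangent (R : realType) (r x z X Z : R) : r <= 0 -> 0 < x -> 0 < z ->
  0 < X -> 0 < Z -> ln X = r * ln x -> ln Z = r * ln z ->
  (- r) * (x - z) * X <= (Z - X) * x.
Proof.
move=> r0 x0 z0 X0 Z0 hX hZ.
have eZ : Z = X * expR (r * (ln z - ln x)).
  have : expR (ln Z) = expR (ln X) * expR (r * (ln z - ln x)).
    by rewrite -expRD hX hZ; congr expR; ring.
  by rewrite !lnK ?posrE.
have hl : ln z - ln x <= z / x - 1.
  rewrite -ln_div ?posrE //; apply: ln_le_sub1; exact: divr_gt0.
have h1 : r * (z / x - 1) <= r * (ln z - ln x) by rewrite ler_wnM2l.
have h2 := expR_ge1Dx (r * (ln z - ln x)).
have h3 : X * (1 + r * (z / x - 1)) <= Z.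
  rewrite eZ; apply: ler_wpM2l; [exact: ltW | lra].
have h4 : X * (1 + r * (z / x - 1)) * x <= Z * x by apply: ler_wpM2r => //; exact: ltW.
have e1 : X * (1 + r * (z / x - 1)) * x = X * x + r * X * (z - x).
  by field; rewrite gt_eqF.
rewrite e1 in h4. lra.
Qed.

Lemma le_sum_term (R : realType) (m : nat) (F : 'I_m -> R) :
  (forall i, 0 <= F i) -> forall j, F j <= \sum_i F i.
Proof.
move=> F0 j; rewrite (bigD1 j) //=.
have : 0 <= \sum_(i | i != j) F i by apply: sumr_ge0 => i _.
lra.
Qed.

Lemma cheb_id (R : realType) m (x y : 'I_m -> R) :
  \sum_i \sum_j (x i - x j) * (y i - y j) =
  2 * (m%:R * \sum_i x i * y i - (\sum_i x i) * (\sum_i y i)).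
Proof.
have e1 : forall i, \sum_j (x i - x j) * (y i - y j) =
   m%:R * (x i * y i) - x i * \sum_j y j - (\sum_j x j) * y i + \sum_j x j * y j.
  move=> i.
  rewrite (eq_bigr (fun j => x i * y i - x i * y j - x j * y i + x j * y j)); last by move=> j _; ring.
  rewrite big_split /= !sumrB sumr_const card_ord -mulr_sumr -mulr_suml.
  by rewrite mulr_natl.
rewrite (eq_bigr _ (fun i _ => e1 i)).
rewrite big_split /= !sumrB -!mulr_sumr -!mulr_suml.
rewrite sumr_const card_ord.
ring.
Qed.

Lemma inv_le_k (R : realType) (x y k : R) : 0 < x -> 0 < y -> y <= k * x -> x^-1 <= k * y^-1.
Proof.
move=> x0 y0 h.
have h1 : y * (x^-1 * y^-1) <= k * x * (x^-1 * y^-1).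
  apply: ler_wpM2r => //; apply: mulr_ge0; apply: ltW; rewrite invr_gt0 //.
have e1 : y * (x^-1 * y^-1) = x^-1 by field; apply/andP; split; rewrite gt_eqF.
have e2 : k * x * (x^-1 * y^-1) = k * y^-1 by field; apply/andP; split; rewrite gt_eqF.
by rewrite e1 e2 in h1.
Qed.

Lemma ge1_of_ln (R : realType) (x : R) : 0 < x -> 0 <= ln x -> 1 <= x.
Proof. move=> x0 h; have := expR_ge1Dx (ln x); rewrite lnK ?posrE //; lra. Qed.

Lemma le_powR_self (R : realType) (x a : R) : 0 < x -> x <= 1 -> 0 < a -> a <= 1 ->
  x <= x `^ a.
Proof.
move=> x0 x1 a0 a1.
rewrite -ler_ln ?posrE ?powR_gt0 // ln_powR.
have := ln_le0 x1; nra.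
Qed.

Lemma eps_cond (R : realType) (al M sT eps x u P : R) :
  0 < al -> al < 1/2 -> 1 <= M -> 0 < eps -> eps <= 1 -> 0 < u -> 0 < P ->
  ln P = (al - 1) * ln u -> P <= 4 * M * sT -> 1 <= sT -> 0 < x -> x <= sT^-1 ->
  (ln (4 * M) - ln eps) / (1 - 2 * al) <= ln sT ->
  x <= eps * (u * P).
Proof.
move=> a0 a1 M1 e0 e1 u0 P0 hP hPle s1 x0 hx hl.
have s0 : 0 < sT by lra.
have hM4 : 0 < 4 * M by lra.
rewrite -ler_ln ?posrE //; last by apply: mulr_gt0 => //; exact: mulr_gt0.
rewrite !lnM ?posrE //; last exact: mulr_gt0.
have h1 : ln x <= - ln sT.
  rewrite -lnV ?posrE //; rewrite ler_ln ?posrE ?invr_gt0 //.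
have h2 : ln P <= ln (4 * M) + ln sT.
  rewrite -lnM ?posrE //; rewrite ler_ln ?posrE //; exact: mulr_gt0.
have hLm : 0 <= ln (4 * M) by apply: ln_ge0; lra.
have hLe : ln eps <= 0 by exact: ln_le0.
have hs : ln (4 * M) - ln eps <= (1 - 2 * al) * ln sT.
  move: hl; rewrite ler_pdivrMr; [lra | lra].
set y := - ln u.
have hy : (1 - al) * y <= ln (4 * M) + ln sT by rewrite /y; rewrite hP in h2; lra.
rewrite hP.
suff : al * y <= ln eps + ln sT by rewrite /y; lra.
have hs0 : 0 <= ln sT by apply: ln_ge0.
have : (1 - al) * (al * y) <= (1 - al) * (ln eps + ln sT).
  have : al * ((1 - al) * y) <= al * (ln (4 * M) + ln sT) by apply: ler_wpM2l => //; lra.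
  nra.
rewrite ler_pM2l //; lra.
Qed.

Section Local.
Variable R : realType.
Variable m : nat.
Variables (al e eta ga c eps : R) (u v g P Q : 'I_m -> R).
Hypothesis hal0 : 0 < al.
Hypothesis hal1 : al < 1/2.
Hypothesis he : 0 < e.
Hypothesis heeta : e <= eta.
Hypothesis hga : 0 < ga.
Hypothesis hu : forall i, 0 < u i.
Hypothesis hsu : \sum_i u i = 1.
Hypothesis hv : forall i, 0 < v i.
Hypothesis hsv : \sum_i v i = 1.
Hypothesis hgl : forall i, - ga / u i <= g i.
Hypothesis hgu : forall i, g i <= ga.
Hypothesis hP : forall i, 0 < P i.
Hypothesis hlP : forall i, ln (P i) = (al - 1) * ln (u i).
Hypothesis hQ : forall i, 0 < Q i.
Hypothesis hlQ : forall i, ln (Q i) = (al - 1) * ln (v i).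
Hypothesis hrel : forall i, Q i = P i + (e * g i - c).
Hypothesis hE : forall i, e * ga <= eps * (u i * P i).
Hypothesis heps : 0 < eps.
Hypothesis hepsm : eps * (m%:R) ^+ 2 <= 1 / 10000.
Hypothesis hm : (1 <= m)%N.

Let M : R := m%:R.
Let a i := e * g i - c.

Let hM1 : 1 <= M. Proof. by rewrite /M ler1n. Qed.
Let hepsM : eps * M ^+ 2 <= 1 / 10000. Proof. exact: hepsm. Qed.

Let u_le1 i : u i <= 1.
Proof. rewrite -hsu; apply: le_sum_term => j; exact: ltW. Qed.
Let v_le1 i : v i <= 1.
Proof. rewrite -hsv; apply: le_sum_term => j; exact: ltW. Qed.

Let P_ge1 i : 1 <= P i.
Proof.
have h : 0 <= ln (P i).
  rewrite hlP; apply: mulr_le0; [have := hal1; lra | exact: ln_le0].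
have := expR_ge1Dx (ln (P i)); rewrite lnK ?posrE //; lra.
Qed.

Let uP_le1 i : u i * P i <= 1.
Proof.
rewrite leNgt; apply/negP => h.
have := ln_gt0 h; rewrite lnM ?posrE // hlP.
have := ln_le0 (u_le1 i) => h1.
have : 0 <= al * (- ln (u i)) by apply: mulr_ge0; [have := hal0; lra| lra].
lra.
Qed.

Let ega_eps (i : 'I_m) : e * ga <= eps.
Proof. have := hE i; have := uP_le1 i; have := heps; nra. Qed.


Let T1 i : (1 - al) * (u i - v i) * P i <= a i * u i.
Proof.
have := @tangent R (al - 1) (u i) (v i) (P i) (Q i) ltac:(have := hal1; lra) (hu i) (hv i) (hP i) (hQ i) (hlP i) (hlQ i).
rewrite hrel /a. 
have -> : (P i + (e * g i - c) - P i) = e * g i - c by ring.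
by rewrite opprB.
Qed.

Let T2 i : a i * v i <= (1 - al) * (u i - v i) * Q i.
Proof.
have := @tangent R (al - 1) (v i) (u i) (Q i) (P i) ltac:(have := hal1; lra) (hv i) (hu i) (hQ i) (hP i) (hlQ i) (hlP i).
rewrite hrel /a. 
have -> : (P i - (P i + (e * g i - c))) = - (e * g i - c) by ring.
move=> h. nra.
Qed.

Let LN i : (1 - al) * (ln (u i) - ln (v i)) <= a i / P i.
Proof.
have e1 : (1 - al) * (ln (u i) - ln (v i)) = ln (Q i / P i).
  rewrite ln_div ?posrE // hlP hlQ; ring.
rewrite e1; have h := ln_le_sub1 (divr_gt0 (hQ i) (hP i)). suff : Q i / P i - 1 <= a i / P i by lra.
have -> : Q i / P i - 1 = a i / P i by rewrite hrel /a; field; rewrite gt_eqF.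
by [].
Qed.

Let LN2 i : ln (u i) - ln (v i) <= u i / v i - 1.
Proof. rewrite -ln_div ?posrE //; apply: ln_le_sub1; exact: divr_gt0. Qed.


Let pinv_gt0 j : 0 < (P j)^-1. Proof. by rewrite invr_gt0. Qed.
Let pinv_le1 j : (P j)^-1 <= 1. Proof. by rewrite invf_le1 ?P_ge1. Qed.
Let PpI j : P j * (P j)^-1 = 1. Proof. by rewrite mulfV // gt_eqF. Qed.

Let i0 : 'I_m := Ordinal hm.

Let S2pos : 0 < \sum_i u i / P i.
Proof.
apply: (lt_le_trans _ (le_sum_term _ i0)).
  exact: divr_gt0.
by move=> j; apply: ltW; exact: divr_gt0.
Qed.

Let sum_uv : \sum_i (1 - al) * (u i - v i) = 0.
Proof. by rewrite -mulr_sumr sumrB hsu hsv subrr mulr0. Qed.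

Let eg_low j : - (e * ga) <= e * g j * u j.
Proof.
have := hgl j; rewrite ler_pdivrMr // => h.
have := he; have := hu j; nra.
Qed.

Lemma c_le : c <= e * ga.
Proof.
have h2 : \sum_i (1 - al) * (u i - v i) <= \sum_i (e * ga - c) * (u i / P i).
  apply: ler_sum => i _.
  have h := T1 i.
  have h' : (1 - al) * (u i - v i) <= (e * g i - c) * (u i / P i).
    by rewrite mulrA ler_pdivlMr.
  apply: (le_trans h'); apply: ler_wpM2r.
    by apply: ltW; exact: divr_gt0.
  have := hgu i; have := he; nra.
rewrite sum_uv -mulr_sumr in h2.
have := S2pos. nra.
Qed.

Let M2ge1 : 1 <= M ^+ 2. Proof. have := hM1; nra. Qed.
Let epsM_small : eps * M <= 1 / 10000.
Proof. have := hepsM; have := hM1; have := heps; nra. Qed.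
Let eps_small : eps <= 1 / 10000.
Proof. have := epsM_small; have := hM1; have := heps; nra. Qed.

Let a_low j : - (2 * eps * P j) <= a j.
Proof.
have h1 : - (e * ga) / u j <= e * g j by rewrite ler_pdivrMr //; exact: eg_low.
have h2 : e * ga / u j <= eps * P j.
  by rewrite ler_pdivrMr //; have := hE j; lra.
have h3 := c_le; have h4 := ega_eps j; have h5 := P_ge1 j.
have h6 : eps <= eps * P j by have := heps; nra.
rewrite mulNr in h1. rewrite /a. lra.
Qed.

Let hQl j : (1 - 2 * eps) * P j <= Q j.
Proof. have := a_low j; rewrite hrel /a; lra. Qed.

Let vu_le j : v j - u j <= 7 * eps * u j.
Proof.
have hp7 : 0 < 7 * eps * u j by have := heps; have := hu j; nra.
case: (lerP 0 (a j)) => ha.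
  have h := T2 j.
  have hav : 0 <= a j * v j by apply: mulr_ge0 => //; exact: ltW.
  have hq : 0 < (1 - al) * Q j by apply: mulr_gt0; [have := hal1; lra | exact: hQ].
  case: (lerP (v j - u j) 0) => hd; first lra.
  have : 0 < (v j - u j) * ((1 - al) * Q j) by exact: mulr_gt0.
  lra.
have h := T2 j.
have h1 : (1 - al) * (v j - u j) * Q j <= 2 * eps * P j * v j.
  have : 0 <= (a j + 2 * eps * P j) * v j.
    by apply: mulr_ge0; [have := a_low j; lra | exact: ltW].
  lra.
case: (lerP (v j - u j) 0) => hd; first lra.
have h2 : (1 / 2 * (v j - u j)) * ((1 - 2 * eps) * P j) <= ((1 - al) * (v j - u j)) * Q j.
  apply: ler_pM.
  - lra.
  - by apply: mulr_ge0; [have := eps_small; lra | exact: ltW].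
  - have := hal1; nra.
  - exact: hQl.
have h3 : (1 / 2 * (v j - u j) * (1 - 2 * eps)) * P j <= (2 * eps * v j) * P j.
  lra.
rewrite ler_pM2r // in h3.
have := eps_small; have := heps; have := hu j; have : 0 < eps * u j by have := heps; have := hu j; nra.
nra.
Qed.

Let sumM : \sum_(i < m) (1 : R) = M.
Proof. by rewrite sumr_const card_ord. Qed.

Let exmax : exists j, 1 <= M * u j.
Proof.
apply/existsP; rewrite -[X in is_true X]negbK; apply/negP => /existsPn hn.
have hpos : forall j, 0 <= 1 - M * u j.
  by move=> j; have := hn j; rewrite -ltNge => h; lra.
have hs : \sum_j (1 - M * u j) = 0 by rewrite sumrB sumM -mulr_sumr hsu mulr1 subrr.
have := le_sum_term hpos i0; rewrite hs.
have := hn i0; rewrite -ltNge => h; lra.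
Qed.

Let imax := xchoose exmax.
Let Mu : 1 <= M * u imax := xchooseP exmax.

Let uv_imax : u imax - v imax <= 7 * eps.
Proof.
have hpos : forall j, 0 <= 7 * eps * u j + (u j - v j).
  by move=> j; have := vu_le j; lra.
have hs : \sum_j (7 * eps * u j + (u j - v j)) = 7 * eps.
  by rewrite big_split /= -mulr_sumr sumrB hsu hsv subrr addr0 mulr1.
have := le_sum_term hpos imax; rewrite hs.
have : 0 <= 7 * eps * u imax by have := heps; have := hu imax; nra.
have := u_le1 imax; have := heps; nra.
Qed.

Let uv_ge0 j : 0 <= a j -> v j <= u j.
Proof.
move=> ha; have h := T2 j.
have hav : 0 <= a j * v j by apply: mulr_ge0 => //; exact: ltW.
have hq : 0 < (1 - al) * Q j by apply: mulr_gt0; [have := hal1; lra | exact: hQ].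
case: (lerP (v j) (u j)) => // hd.
have : 0 < (v j - u j) * ((1 - al) * Q j) by apply: mulr_gt0 => //; lra.
lra.
Qed.

Let MleM2 : M <= M ^+ 2. Proof. have := hM1; nra. Qed.

Let P_imax : P imax <= M.
Proof.
have := uP_le1 imax; have := Mu; have := hP imax; have := hM1; nra.
Qed.

Let eg_imax : - (e * g imax) <= e * ga * M.
Proof.
have h := eg_low imax.
case: (lerP 0 (e * g imax)) => hg.
  have : 0 <= e * ga * M.
    by apply: mulr_ge0; [apply: mulr_ge0; apply: ltW | have := hM1; lra].
  lra.
have h2 : - (e * g imax) <= - (e * g imax) * (M * u imax).
  have := Mu; nra.
have : 0 <= M * (e * g imax * u imax + e * ga).
  by apply: mulr_ge0; [have := hM1; lra | lra].
lra.
Qed.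

Lemma c_low1 : - c <= 16 * eps * M ^+ 2.
Proof.
have hk := eg_imax.
have hegM : e * ga * M <= eps * M by have := ega_eps imax; have := hM1; nra.
have h1 : eps * M <= eps * M ^+ 2 by have := heps; have := MleM2; nra.
case: (lerP 0 (a imax)) => ha; last first.
  by rewrite /a in ha; have := heps; have := M2ge1; nra.
have huv := uv_ge0 ha.
have h := T2 imax.
have h2 : (1 - al) * (u imax - v imax) * Q imax <= 7 * eps * Q imax.
  have h2a : (1 - al) * (u imax - v imax) <= 7 * eps.
    have := uv_imax; have := hal0; nra.
  by apply: ler_wpM2r => //; exact: ltW.
have hQe : Q imax = P imax + a imax by rewrite hrel.
have h3 : a imax * v imax <= 7 * eps * (M + a imax).
  have : eps * P imax <= eps * M by apply: ler_wpM2l; [exact: ltW | exact: P_imax].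
  rewrite hQe in h h2. lra.
have h4 : 1 <= 2 * M * v imax.
  have : 0 <= M * (v imax - u imax + 7 * eps).
    by apply: mulr_ge0; [have := hM1; lra | have := uv_imax; lra].
  have := Mu; have := epsM_small; lra.
have h5 : a imax <= 2 * M * (a imax * v imax).
  have := h4; nra.
have h6 : a imax * (1 - 14 * eps * M) <= 14 * eps * M ^+ 2.
  have : 2 * M * (a imax * v imax) <= 2 * M * (7 * eps * (M + a imax)).
    by apply: ler_wpM2l => //; have := hM1; lra.
  lra.
have h7 : a imax <= 15 * eps * M ^+ 2.
  have := epsM_small; have := heps; have := M2ge1; nra.
rewrite /a in h7. lra.
Qed.

Let A_le j : a j <= 17 * eps * M ^+ 2.
Proof.
have := c_low1; have := hgu j; have := he; have := ega_eps j; have := heps; have := M2ge1.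
rewrite /a; nra.
Qed.

Let A_small : 17 * eps * M ^+ 2 <= 17 / 10000.
Proof. have := hepsM; lra. Qed.

Let r j : R := if 0 <= a j then 99 / 100 else 101 / 100.

Let st2 j : r j * (a j * u j / P j) <= (1 - al) * (u j - v j).
Proof.
rewrite /r; case: ifPn => ha.
  have hA := A_le j.
  have huv := uv_ge0 ha.
  have h1 := T1 j. have h2 := T2 j.
  set A := 17 * eps * M ^+ 2 in hA.
  have hA0 : 0 <= A by rewrite /A; have := heps; have := M2ge1; nra.
  have hAs : A <= 17 / 10000 by exact: A_small.
  have hb : (1 - al) * (u j - v j) <= A * u j.
    have h3 : (1 - al) * (u j - v j) * P j <= (A * u j) * P j.
      have : a j * u j <= A * u j by apply: ler_wpM2r => //; exact: ltW.
      have : A * u j <= A * u j * P j.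
        have := P_ge1 j; have : 0 <= A * u j by apply: mulr_ge0 => //; exact: ltW.
        nra.
      lra.
    by rewrite ler_pM2r in h3.
  have hvv : u j * (1 - 2 * A) <= v j.
    have := hal1; have := hal0; nra.
  have hQu : Q j <= P j * (1 + A).
    rewrite hrel; have := P_ge1 j; rewrite /a in hA; nra.
  have h4 : a j * (u j * (1 - 2 * A)) <= a j * v j by exact: ler_wpM2l.
  have h5 : (1 - al) * (u j - v j) * Q j <= (1 - al) * (u j - v j) * (P j * (1 + A)).
    apply: ler_wpM2l => //; apply: mulr_ge0; [have := hal1; lra | lra].
  have h6 : 99 / 100 * (a j * u j) <= (1 - al) * (u j - v j) * P j.
    have hX : 0 <= a j * u j by apply: mulr_ge0 => //; exact: ltW.
    have hY : 0 <= (1 - al) * (u j - v j) * P j.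
      apply: mulr_ge0; [apply: mulr_ge0; [have := hal1; lra | lra] | exact: ltW].
    have hh : 99 / 100 * (a j * u j) * (1 + A) <= (1 - al) * (u j - v j) * P j * (1 + A).
      have : 99 / 100 * (1 + A) <= 1 - 2 * A by lra.
      nra.
    move: hh; rewrite ler_pM2r; [done | lra].
  by rewrite !mulrA ler_pdivrMr //; lra.
rewrite -ltNge in ha.
have h2 := T2 j.
have hvu : v j <= u j * (1 + 7 * eps) by have := vu_le j; lra.
have hQl' := hQl j.
have hk : v j * P j <= 101 / 100 * u j * Q j.
  have : v j * P j <= u j * (1 + 7 * eps) * P j by apply: ler_wpM2r => //; exact: ltW.
  have : u j * (1 + 7 * eps) * P j <= 101 / 100 * u j * ((1 - 2 * eps) * P j).
    have : 0 <= u j * P j by apply: mulr_ge0; exact: ltW.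
    have := eps_small; have := heps; nra.
  have : 101 / 100 * u j * ((1 - 2 * eps) * P j) <= 101 / 100 * u j * Q j.
    apply: ler_wpM2l => //; have := hu j; lra.
  lra.
have h7 : 101 / 100 * (a j * u j) * Q j <= a j * v j * P j.
  have : a j * (101 / 100 * u j * Q j) <= a j * (v j * P j).
    by rewrite ler_nM2l.
  lra.
have h8 : a j * v j * P j <= (1 - al) * (u j - v j) * Q j * P j.
  by apply: ler_wpM2r => //; exact: ltW.
have h9 : 101 / 100 * (a j * u j) * Q j <= (1 - al) * (u j - v j) * P j * Q j.
  lra.
rewrite ler_pM2r // in h9.
by rewrite !mulrA ler_pdivrMr //; lra.
Qed.

Let S1 := \sum_i (P i)^-1.
Let S2 := \sum_i u i / P i.

Let P_anti i j : u i <= u j -> P j <= P i.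
Proof.
move=> h.
have hl : ln (u i) <= ln (u j) by rewrite ler_ln ?posrE.
have : ln (P j) <= ln (P i) by rewrite hlP hlP; have := hal1; nra.
by rewrite ler_ln ?posrE.
Qed.

Let cheb_term i j : 0 <= ((P i)^-1 - (P j)^-1) * (u i - u j).
Proof.
case: (lerP (u i) (u j)) => h.
  have : (P i)^-1 <= (P j)^-1 by rewrite lef_pV2 ?posrE //; exact: P_anti.
  nra.
have : (P j)^-1 <= (P i)^-1 by rewrite lef_pV2 ?posrE //; apply: P_anti; exact: ltW.
nra.
Qed.

Let cheb : S1 <= M * S2.
Proof.
have h := cheb_id (fun i => (P i)^-1) u.
have h0 : 0 <= \sum_i \sum_j ((P i)^-1 - (P j)^-1) * (u i - u j).
  by apply: sumr_ge0 => i _; apply: sumr_ge0 => j _; exact: cheb_term.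
rewrite h hsu mulr1 in h0.
have -> : S2 = \sum_i (P i)^-1 * u i by apply: eq_bigr => i _; rewrite mulrC.
rewrite /S1 /M; lra.
Qed.

Let S2_pos : 0 < S2. Proof. exact: S2pos. Qed.

Let S1_le : S1 <= M.
Proof.
have : \sum_(i < m) (P i)^-1 <= \sum_(i < m) (1 : R) by apply: ler_sum => i _; exact: pinv_le1.
by rewrite sumM.
Qed.

Let sum_st2 : \sum_j r j * (a j * u j / P j) <= 0.
Proof.
have : \sum_j r j * (a j * u j / P j) <= \sum_i (1 - al) * (u i - v i).
  by apply: ler_sum => j _; exact: st2.
by rewrite sum_uv.
Qed.

Lemma c_low2 : - c <= 103 / 100 * M * (e * ga).
Proof.
have hMe : 0 <= M * (e * ga).
  by apply: mulr_ge0; [have := hM1; lra | apply: mulr_ge0; exact: ltW].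
case: (lerP 0 c) => hc; first lra.
have hterm : forall j, 99 / 100 * (- c) * (u j / P j) - 101 / 100 * (e * ga) * (P j)^-1
   <= r j * (a j * u j / P j).
  move=> j.
  have h1 : 0 <= (e * g j * u j + e * ga) * (P j)^-1.
    by apply: mulr_ge0; [have := eg_low j; lra | exact: ltW].
  have h2 : 0 <= (- c) * (u j * (P j)^-1).
    by apply: mulr_ge0; [lra | apply: mulr_ge0; exact: ltW].
  have h3 : 0 <= e * ga * (P j)^-1 by apply: mulr_ge0; [apply: mulr_ge0; exact: ltW| exact: ltW].
  rewrite /r /a; case: ifP => _; lra.
have hs : \sum_j (99 / 100 * (- c) * (u j / P j) - 101 / 100 * (e * ga) * (P j)^-1)
   <= 0.
  apply: le_trans sum_st2; apply: ler_sum => j _; exact: hterm.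
rewrite sumrB -!mulr_sumr -/S1 -/S2 in hs.
have hch := cheb.
have : 101 / 100 * (e * ga) * S1 <= 101 / 100 * (e * ga) * (M * S2).
  apply: ler_wpM2l => //; apply: mulr_ge0; [lra | apply: mulr_ge0; exact: ltW].
have := S2_pos. nra.
Qed.

Let B := e * ga * (1 + 103 / 100 * M).

Let a_leB j : a j <= B.
Proof. have := c_low2; have := hgu j; have := he; rewrite /B /a; nra. Qed.

Let f_bound j : g j * (u j - v j) + 4 * ga * (ln (u j) - ln (v j)) <= 10 * ga * B * (P j)^-1.
Proof.
have hp := pinv_gt0 j.
have hB0 : 0 <= B.
  rewrite /B; apply: mulr_ge0; [apply: mulr_ge0; exact: ltW | have := hM1; lra].
case: (lerP 0 (a j)) => ha.
  have huv := uv_ge0 ha.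
  have h1 : g j * (u j - v j) <= ga * (u j - v j) by apply: ler_wpM2r; [lra | exact: hgu].
  have hT := T1 j.
  have h2 : (1 - al) * (u j - v j) <= a j * (P j)^-1.
    rewrite ler_pdivlMr //; apply: (le_trans hT).
    have := u_le1 j; nra.
  have h2' : u j - v j <= 2 * (a j * (P j)^-1) by have := hal1; nra.
  have hL := LN j.
  have h3 : ln (u j) - ln (v j) <= 2 * (a j * (P j)^-1).
    have : 0 <= a j * (P j)^-1 by apply: mulr_ge0 => //; exact: ltW.
    case: (lerP 0 (ln (u j) - ln (v j))) => hx; last lra.
    have := hal1; nra.
  have h4 : ga * (u j - v j) <= ga * (2 * (a j * (P j)^-1)) by apply: ler_wpM2l => //; exact: ltW.
  have h5 : 4 * ga * (ln (u j) - ln (v j)) <= 4 * ga * (2 * (a j * (P j)^-1)).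
    by apply: ler_wpM2l => //; have := hga; lra.
  have h6 : 0 <= (B - a j) * (ga * (P j)^-1).
    by apply: mulr_ge0; [have := a_leB j; lra | apply: mulr_ge0; exact: ltW].
  lra.
have hvu : u j < v j.
  have hT := T1 j.
  case: (lerP (v j) (u j)) => // h.
  have : 0 <= (1 - al) * (u j - v j) * P j.
    apply: mulr_ge0; [apply: mulr_ge0; [have := hal1; lra | lra] | exact: ltW].
  have : a j * u j < 0 by rewrite pmulr_llt0.
  lra.
have h1 : g j * (u j - v j) <= ga / u j * (v j - u j).
  have : - g j * (v j - u j) <= ga / u j * (v j - u j).
    apply: ler_wpM2r; [lra | have := hgl j; rewrite mulNr; lra].
  lra.
have h2 : ln (u j) - ln (v j) <= - ((v j - u j) * (v j)^-1).
  have := LN2 j.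
  have -> : u j / v j - 1 = - ((v j - u j) * (v j)^-1) by field; rewrite gt_eqF.
  done.
have h3 : (u j)^-1 <= 4 * (v j)^-1.
  apply: inv_le_k => //; have := vu_le j; have := eps_small; have := hu j; have := heps; nra.
have h4 : ga * (v j - u j) * (u j)^-1 <= ga * (v j - u j) * (4 * (v j)^-1).
  apply: ler_wpM2l => //; apply: mulr_ge0; [exact: ltW | lra].
have h5 : 4 * ga * (ln (u j) - ln (v j)) <= 4 * ga * (- ((v j - u j) * (v j)^-1)).
  by apply: ler_wpM2l => //; have := hga; lra.
have h6 : 0 <= 10 * ga * B * (P j)^-1.
  apply: mulr_ge0; [apply: mulr_ge0 => //; have := hga; lra | exact: ltW].
lra.
Qed.

Let sum_f : \sum_j g j * (u j - v j) + 4 * ga * \sum_j (ln (u j) - ln (v j))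
   <= 10 * ga * B * M.
Proof.
rewrite mulr_sumr -big_split /=.
apply: (le_trans (ler_sum _ (fun j _ => f_bound j))).
rewrite -mulr_sumr -/S1.
apply: ler_wpM2l; last exact: S1_le.
apply: mulr_ge0; [have := hga; lra | ].
rewrite /B; apply: mulr_ge0; [apply: mulr_ge0; exact: ltW | have := hM1; lra].
Qed.

Lemma stepA : (2 <= m)%N ->
  \sum_j g j * (u j - v j) + 4 * ga * \sum_j (ln (u j) - ln (v j))
   <= 19 * M ^+ 2 * ga ^+ 2 * eta.
Proof.
move=> hm2.
have hM2 : 2 <= M by rewrite /M ler_nat.
apply: (le_trans sum_f).
have hg2 : 0 <= ga * ga by have := hga; nra.
have hK : 10 * (1 + 103 / 100 * M) * M <= 19 * M ^+ 2 by nra.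
have -> : 10 * ga * B * M = (e * (ga * ga)) * (10 * (1 + 103 / 100 * M) * M) by rewrite /B; ring.
have -> : 19 * M ^+ 2 * ga ^+ 2 * eta = (eta * (ga * ga)) * (19 * M ^+ 2) by ring.
apply: (le_trans (ler_wpM2l _ hK)).
  by apply: mulr_ge0 => //; exact: ltW.
apply: ler_wpM2r; first nra.
by apply: ler_wpM2r.
Qed.

Lemma stepB j : Q j <= P j + 3 * M * eta * ga.
Proof.
have := a_leB j; rewrite hrel /B /a.
have h1 : e * ga <= eta * ga by apply: ler_wpM2r => //; exact: ltW.
have h2 : 0 <= e * ga by apply: mulr_ge0; exact: ltW.
have h3 : e * ga * (1 + 103 / 100 * M) <= eta * ga * (1 + 103 / 100 * M).
  by apply: ler_wpM2r => //; have := hM1; lra.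
have h4 : eta * ga * (1 + 103 / 100 * M) <= eta * ga * (3 * M).
  by apply: ler_wpM2l; [lra | have := hM1; lra].
lra.
Qed.

Lemma stepA1 : m = 1%N ->
  \sum_j g j * (u j - v j) + 4 * ga * \sum_j (ln (u j) - ln (v j))
   <= 19 * M ^+ 2 * ga ^+ 2 * eta.
Proof.
move=> m1.
have hall : forall j k : 'I_m, j = k.
  move=> j k; apply: ord_inj.
  have hj : (nat_of_ord j < 1)%N by rewrite -m1; exact: ltn_ord.
  have hk : (nat_of_ord k < 1)%N by rewrite -m1; exact: ltn_ord.
  by move: hj hk; case: (nat_of_ord j) => [|?] //; case: (nat_of_ord k) => [|?].
have hs : forall (F : 'I_m -> R) j, \sum_k F k = F j.
  move=> F j; rewrite (bigD1 j) //= big1 ?addr0 // => k.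
  by rewrite (hall k j) eqxx.
have huv : forall j, u j = v j by move=> j; rewrite -(hs u j) -(hs v j) hsu hsv.
rewrite (hs _ i0) (hs _ i0) huv subrr mulr0 subrr mulr0 add0r.
have : 0 <= ga ^+ 2 * eta.
  apply: mulr_ge0; [exact: sqr_ge0 | have := he; have := heeta; lra].
have : 0 <= M ^+ 2 by exact: sqr_ge0.
nra.
Qed.


End Local.

Section Main.
Variables (R : realType) (alpha : R) (m n T : nat).
Variables (p : reports R m n) (jt : nat -> 'I_n) (w : nat -> 'I_m -> R) (etas : nat -> R).
Hypothesis ha0 : 0 < alpha.
Hypothesis ha1 : alpha < 1 / 2.
Hypothesis hm : (1 <= m)%N.
Hypothesis hn : (1 <= n)%N.
Hypothesis hT2 : (2 <= T)%N.
Hypothesis hrun : is_run alpha T p jt w etas.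
Hypothesis hsg : small_gradient T p jt w.

Let M : R := m%:R.
Let eps : R := (10000 * M ^+ 2)^-1.
Let sT : R := Num.sqrt (T%:R).
Hypothesis hlarge : (ln (4 * M) - ln eps) / (1 - 2 * alpha) <= ln sT.

Let eta : R := eta_alg m n alpha T.
Let ga : R := gamma_of R n T.
Let P t i := w t i `^ (alpha - 1).
Let Mp : R := M `^ ((1 + alpha) / 2).

Let hM1 : 1 <= M. Proof. by rewrite /M ler1n. Qed.
Let hN1 : 1 <= (n%:R : R). Proof. by rewrite ler1n. Qed.
Let hTR : 2 <= (T%:R : R). Proof. by rewrite (ler_nat R 2 T). Qed.
Let lnT_pos : 0 < ln (T%:R : R). Proof. apply: ln_gt0; have := hTR; lra. Qed.
Let sT2 : sT ^+ 2 = T%:R. Proof. rewrite /sT sqr_sqrtr //; have := hTR; lra. Qed.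
Let sT_ge1 : 1 <= sT.
Proof. have := sT2; have := hTR; have : 0 <= sT by exact: sqrtr_ge0. nra. Qed.
Let Mp_ge1 : 1 <= Mp.
Proof.
have := hM1; have := ha0 => h0 h1.
apply: ge1_of_ln; first by apply: powR_gt0; lra.
rewrite ln_powR; apply: mulr_ge0; [lra | apply: ln_ge0; lra].
Qed.
Let ga_pos : 0 < ga.
Proof. have := hN1 => h; rewrite /ga /gamma_of; apply: mulr_gt0; [apply: mulr_gt0; lra | exact: lnT_pos]. Qed.
Let eta_pos : 0 < eta.
Proof.
have := hN1; have := sT_ge1 => h0 h1.
rewrite /eta /eta_alg -/sT; apply: mulr_gt0; rewrite invr_gt0.
  apply: mulr_gt0 => //; lra.
have h2 : 0 < Mp by exact: (lt_le_trans _ Mp_ge1).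
apply: mulr_gt0; [apply: mulr_gt0; [lra | exact: h2] | lra].
Qed.
Let etaga : eta * ga = (sT * Mp)^-1.
Proof.
rewrite /eta /ga /eta_alg /gamma_of -/sT -/Mp -/M.
have h1 : 0 < Mp by exact: (lt_le_trans _ Mp_ge1).
have h2 := lnT_pos; have h3 := hN1; have h4 := sT_ge1.
field.
by rewrite !gt_eqF //; lra.
Qed.

Let Mp_pos : 0 < Mp. Proof. exact: (lt_le_trans _ Mp_ge1). Qed.
Let sT_pos : 0 < sT. Proof. have := sT_ge1; lra. Qed.

Let etaga_le : eta * ga <= sT^-1.
Proof.
rewrite etaga; have := @inv_le_k R (sT * Mp) sT 1 (mulr_gt0 sT_pos Mp_pos) sT_pos.
rewrite !mul1r; apply; have := Mp_ge1; have := sT_pos; nra.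
Qed.

Let Tetaga : T%:R * (eta * ga) <= sT.
Proof.
rewrite etaga -sT2.
have -> : sT ^+ 2 * (sT * Mp)^-1 = sT * Mp^-1.
  by field; rewrite !gt_eqF.
have : Mp^-1 <= 1 by rewrite invf_le1.
have := sT_pos; nra.
Qed.

Let eps_pos : 0 < eps.
Proof. rewrite /eps invr_gt0; have := hM1; nra. Qed.
Let epsM : eps * M ^+ 2 <= 1 / 10000.
Proof.
have -> : eps * M ^+ 2 = 1 / 10000.
  by rewrite /eps; field; rewrite gt_eqF //; have := hM1; lra.
by [].
Qed.
Let eps_le1 : eps <= 1.
Proof. have := epsM; have := hM1; have := eps_pos; nra. Qed.

Let inv t := [/\ (forall i, 0 < w t i), \sum_i w t i = 1,
  (forall i, P t i <= M + (t.-1)%:R * (3 * M * eta * ga)) &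
  ((1 < t)%N -> 0 < etas t.-1)].

Let inv1 : inv 1.
Proof.
have [h1 _] := hrun.
have hM0 : 0 < M by have := hM1; lra.
split => //.
- by move=> i; rewrite h1 invr_gt0.
- rewrite (eq_bigr (fun _ => M^-1)) ?sumr_const ?card_ord; last by move=> i _; rewrite h1.
  by rewrite -mulr_natr mulVf // gt_eqF.
- move=> i; rewrite /P h1 /= mul0r addr0.
  rewrite -ler_ln ?posrE ?powR_gt0 ?invr_gt0 // ln_powR lnV ?posrE //.
  have := ln_ge0 hM1; have := ha0; nra.
Qed.

Let etas_ok t : (1 <= t <= T)%N -> inv t -> 0 < etas t /\ etas t <= eta.
Proof.
move=> ht hinv; case: hinv => hpos hsum _ hprev.
have [_ h2] := hrun; case: (h2 t ht) => he _.
set x := (if [forall i, _] then _ else _) in he.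
have hx : 0 < x /\ x <= eta.
  rewrite /x; case: ifP => [_ | hneg].
    by split; [exact: eta_pos | exact: lexx].
  have := negbT hneg => /forallPn [i hi].
  rewrite -ltNge in hi.
  have hw1 : w t i <= 1.
    by rewrite -hsum; apply: le_sum_term => j; exact: ltW.
  have hpw : w t i <= w t i `^ alpha.
    by apply: le_powR_self => //; have := ha1; lra.
  have hmin : min_over (w t) <= w t i by exact: bigmin_le.
  split.
    by apply: lt_bigmin => // j _.
  have := hi; rewrite -/eta; lra.
rewrite he; case: eqP => t1; first exact: hx.
have ht1 : (1 < t)%N by case/andP: ht => h _; rewrite ltn_neqAle h andbT eq_sym; apply/eqP.
have hp := hprev ht1.
split; first by rewrite lt_min hp; case: hx.
by rewrite ge_min; apply/orP; right; case: hx.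
Qed.

Let P_pos t i : 0 < w t i -> 0 < P t i.
Proof. by move=> h; apply: powR_gt0. Qed.

Let lnP t i : ln (P t i) = (alpha - 1) * ln (w t i).
Proof. by rewrite /P ln_powR. Qed.

Let hEt t : (t <= T.+1)%N -> inv t -> forall i, eta * ga <= eps * (w t i * P t i).
Proof.
move=> ht hinv i; case: hinv => hpos hsum hPb _.
have hb := hPb i.
have hetaga0 : 0 <= eta * ga by apply: mulr_ge0; apply: ltW.
have htn : ((t.-1)%:R : R) <= T%:R by rewrite ler_nat; move: ht; case: (t).
have h1 : (t.-1)%:R * (3 * M * eta * ga) <= T%:R * (3 * M * eta * ga).
  apply: ler_wpM2r => //.
  have -> : 3 * M * eta * ga = 3 * M * (eta * ga) by ring.
  apply: mulr_ge0 => //; have := hM1; lra.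
have h2 : T%:R * (3 * M * eta * ga) <= 3 * M * sT.
  have -> : T%:R * (3 * M * eta * ga) = 3 * M * (T%:R * (eta * ga)) by ring.
  apply: ler_wpM2l; [have := hM1; lra | exact: Tetaga].
have h4 : M <= M * sT.
  have hM0 : 0 <= M by have := hM1; lra.
  by have := ler_wpM2l hM0 sT_ge1; rewrite mulr1.
have h3 : P t i <= 4 * M * sT by lra.
apply: (eps_cond ha0 ha1 hM1 eps_pos eps_le1 (hpos i) (P_pos (hpos i)) (lnP t i) h3 sT_ge1).
- by apply: mulr_gt0.
- exact: etaga_le.
- exact: hlarge.
Qed.

Let run_step t : (1 <= t <= T)%N ->
  in_simplex_pos (w t.+1) /\ exists c, forall i,
   - P t.+1 i = - P t i - etas t * gradL p jt t (w t) i + c.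
Proof. move=> ht; have [_ h2] := hrun; by case: (h2 t ht) => _. Qed.

Let step t : (1 <= t <= T)%N -> inv t -> inv t.+1.
Proof.
move=> ht hinv.
have [eh el] := etas_ok ht hinv.
have hE := hEt (leq_trans (proj2 (andP ht)) (leqnSn T)) hinv.
case: hinv => hpos hsum hPb _.
have [[hvpos hvsum] [c hc]] := run_step ht.
have hsgt := hsg ht.
have hB := @stepB R m alpha (etas t) eta ga c eps (w t) (w t.+1) (gradL p jt t (w t))
  (P t) (P t.+1) ha0 ha1 eh el ga_pos hpos hsum hvpos hvsum
  (fun i => proj1 (hsgt i)) (fun i => proj2 (hsgt i))
  (fun i => P_pos (hpos i)) (lnP t) (fun i => P_pos (hvpos i)) (lnP t.+1).
have hrel : forall i, P t.+1 i = P t i + (etas t * gradL p jt t (w t) i - c).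
  by move=> i; have := hc i; lra.
have hE' : forall i, etas t * ga <= eps * (w t i * P t i).
  move=> i; apply: le_trans (hE i); apply: ler_wpM2r => //; exact: ltW.
have {}hB := hB hrel hE' eps_pos epsM hm.
split => //.
- move=> i /=; apply: (le_trans (hB i)).
  have := hPb i.
  have -> : (t%:R : R) = (t.-1)%:R + 1.
    by rewrite natr1 prednK //; case/andP: ht.
  lra.
Qed.

Let inv_all t : (1 <= t <= T.+1)%N -> inv t.
Proof.
elim: t => [//|t IH] ht.
case: (posnP t) => [-> //|tpos].
case/andP: ht => _ h; rewrite ltnS in h.
apply: step; first by rewrite tpos h.
by apply: IH; rewrite tpos /= (leq_trans h) // leqnSn.
Qed.

Lemma phi_dec t : (t < T)%N -> phi alpha T p jt w t.+1 <= phi alpha T p jt w t.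
Proof.
move=> ht.
have hτ : (1 <= t.+1 <= T)%N by rewrite ltn0Sn ht.
have hτ' : (1 <= t.+1 <= T.+1)%N by rewrite ltn0Sn ltnS (ltnW ht).
have hinv := inv_all hτ'.
have [eh el] := etas_ok hτ hinv.
have hE := hEt (proj2 (andP hτ')) hinv.
case: hinv => hpos hsum _ _.
have [[hvpos hvsum] [c hc]] := run_step hτ.
have hsgt := hsg hτ.
have hrel : forall i, P t.+2 i = P t.+1 i + (etas t.+1 * gradL p jt t.+1 (w t.+1) i - c).
  by move=> i; have := hc i; lra.
have hE' : forall i, etas t.+1 * ga <= eps * (w t.+1 i * P t.+1 i).
  move=> i; apply: le_trans (hE i); apply: ler_wpM2r => //; exact: ltW.
have key : \sum_j gradL p jt t.+1 (w t.+1) j * (w t.+1 j - w t.+2 j)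
   + 4 * ga * \sum_j (ln (w t.+1 j) - ln (w t.+2 j)) <= 19 * M ^+ 2 * ga ^+ 2 * eta.
  case: (ltngtP m 1) => hm1.
  - by move: hm; rewrite leqNgt hm1.
  - exact: (@stepA R m alpha (etas t.+1) eta ga c eps (w t.+1) (w t.+2)
      (gradL p jt t.+1 (w t.+1)) (P t.+1) (P t.+2) ha0 ha1 eh el ga_pos hpos hsum hvpos hvsum
      (fun i => proj1 (hsgt i)) (fun i => proj2 (hsgt i))
      (fun i => P_pos (hpos i)) (lnP t.+1) (fun i => P_pos (hvpos i)) (lnP t.+2)
      hrel hE' eps_pos epsM hm hm1).
  - exact: (@stepA1 R m (etas t.+1) eta ga (w t.+1) (w t.+2)
      (gradL p jt t.+1 (w t.+1)) eh el hsum hvsum hm hm1).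
rewrite /phi big_nat_recr //=.
rewrite sumrB in key.
rewrite -/eta -/ga -/M.
have -> : ((t.+1)%:R : R) = t%:R + 1 by rewrite natr1.
set K := 19 * M ^+ 2 * ga ^+ 2 * eta in key *.
lra.
Qed.

End Main.

End Aux.
Import Aux.

Theorem lemma3 (R : realType) (alpha : R) (m n : nat) :
  0 < alpha < 1 / 2 ->
  exists T0 : nat, forall T : nat, (T0 <= T)%N ->
  forall (p : reports R m n) (jt : nat -> 'I_n)
         (w : nat -> 'I_m -> R) (etas : nat -> R),
    (forall t, (1 <= t <= T)%N -> forall i, in_simplex_pos (p t i)) ->
    is_run alpha T p jt w etas ->
    small_gradient T p jt w ->
    forall t : nat, (t < T)%N ->
      phi alpha T p jt w t.+1 <= phi alpha T p jt w t.
Proof.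
move=> /andP[ha0 ha1].
case: (posnP m) => [m0 | hm].
  exists 0%N => T _ p jt w etas _ _ _ t _.
  subst m.
  have hz : forall (F : nat -> 'I_0 -> R) k, \sum_(1 <= s < k) \sum_(i < 0) F s i = 0.
    by move=> F k; rewrite big1 // => s _; rewrite big_ord0.
  rewrite /phi !hz !big_ord0.
  have -> : ((0%N)%:R : R) ^+ 2 = 0 by rewrite expr2 mulr0.
  by rewrite !mulr0 !mul0r.
set Mr : R := m%:R.
set eps : R := (10000 * Mr ^+ 2)^-1.
set K : R := (ln (4 * Mr) - ln eps) / (1 - 2 * alpha).
exists (maxn 2 (Num.Def.archi_bound (expR K ^+ 2))).
move=> T hT p jt w etas _ hrun hsg t ht.
have hn : (0 < n)%N by case: (jt 0%N) => k hk; exact: leq_ltn_trans (leq0n k) hk.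
have hT2 : (1 < T)%N by exact: leq_trans (leq_maxl 2 _) hT.
apply: (phi_dec ha0 ha1 hm hn hT2 hrun hsg _ ht).
have hb := @archi_boundP R (expR K ^+ 2) (sqr_ge0 _).
have hT' : (Num.Def.archi_bound (expR K ^+ 2))%:R <= (T%:R : R).
  by rewrite ler_nat; exact: leq_trans (leq_maxr 2 _) hT.
have h1 : expR K ^+ 2 <= T%:R by apply: ltW; exact: lt_le_trans hb hT'.
have h2 : expR K <= Num.sqrt (T%:R : R).
  by rewrite -(ger0_norm (ltW (expR_gt0 K))) -sqrtr_sqr ler_sqrt //; apply: (le_trans (sqr_ge0 (expR K))).
have h3 : 0 < Num.sqrt (T%:R : R) by exact: lt_le_trans (expR_gt0 K) h2.
rewrite -/Mr -/eps -/K.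
by rewrite -ler_ln ?posrE ?expR_gt0 // expRK in h2.
Qed.
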